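(* Let $(T,\preceq,\Sigma,\mathcal S,\mathcal M)$ be an $(\mathcal S,\mathcal M)$-tree, $n\in\omega$, and $f\in\mathcal{AM}$ with domain $T(\le n)$. Then there exists a unique $f^+\in\mathcal M$ such that $f^+\restriction T(\le n)=f$ and every $\ell\ge\tilde f(n)$ belongs to $\tilde{f^+}[\omega]$.
   Context: A tree is a partially ordered set $(T,\preceq)$ such that for every $a\in T$ the set $\{b\in T:b\prec a\}$ is finite and linearly ordered by $\preceq$. The level of $a$ is $\ell(a)=|\{b\in T:b\prec a\}|$; $T(n)=\{a\in T:\ell(a)=n\}$, and $T(\le n)$, $T(<n)$ are defined analogously. A node $b$ is an immediate successor of $a$ if $a\prec b$ and there is no $c$ with $a\prec c\prec b$. An $\mathcal S$-tree is a quadruple $(T,\preceq,\Sigma,\mathcal S)$ where $(T,\preceq)$ is a countable tree in which every node has finitely many immediate successors and $T(0)$ is finite, $\Sigma$ is a set, and $\mathcal S\colon T\times T^{<\omega}\times\Sigma\to T$ is a partial function such that: (S1) if $\mathcal S(a,\bar p,c)$ is defined then it is an immediate successor of $a$ and every entry of $\bar p$ has level at most $\ell(a)-1$; (S2) if $\mathcal S(a,\bar p,c)=\mathcal S(b,\bar q,d)$ then $a=b$, $\bar p=\bar q$ and $c=d$; (S3) for every $a\in T$ and every immediate successor $b$ of $a$ there are $\bar p\in T^{<\omega}$ and $c\in\Sigma$ with $b=\mathcal S(a,\bar p,c)$. For $S\subseteq T$, a map $f\colon S\to T$ is level-preserving if $\ell(a)=\ell(b)$ implies $\ell(f(a))=\ell(f(b))$;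 then $\tilde f(n)$ denotes $\ell(f(a))$ for any $a\in S$ with $\ell(a)=n$. An injection $F\colon T\to T$ is shape-preserving if (i) it is level-preserving; (ii) whenever $\mathcal S(a,\bar p,c)$ is defined, $\mathcal S(F(a),F(\bar p),c)$ is defined and $\mathcal S(F(a),F(\bar p),c)\preceq F(\mathcal S(a,\bar p,c))$, where $F(\bar p)$ is the tuple of images of the entries of $\bar p$; (iii) for every $a\in T(0)$ and $b\in T$ with $a\preceq b$ we have $a\preceq F(b)$. A shape-preserving $F$ skips level $m$ if $m\notin\tilde F[\omega]$, and skips only level $m$ if $\tilde F[\omega]=\omega\setminus\{m\}$. An $(\mathcal S,\mathcal M)$-tree is a quintuple $(T,\preceq,\Sigma,\mathcal S,\mathcal M)$ where $(T,\preceq,\Sigma,\mathcal S)$ is an $\mathcal S$-tree and $\mathcal M$ is a set of shape-preserving functions $T\to T$ such that: (M1) $\mathrm{Id}_T\in\mathcal M$, $\mathcal M$ is closed under composition, and whenever $(F_i)_{i\in\omega}$ is a sequence in $\mathcal M$ with $F_i\restriction T(\le i)=F_{i+1}\restriction T(\le i)$ for all $i$, there is $F_\infty\in\mathcal M$ with $F_\infty\restriction T(\le i)=F_i\restriction T(\le i)$ for all $i$; (M2) for every $n\in\omega$ and every $F\in\mathcal M$ with $\tilde F(n)>0$ which skips level $\tilde F(n)-1$, there are $F_1,F_2\in\mathcal M$ such that $F_2$ skips only level $\tilde F(n)-1$ and $(F_2\circ F_1)\restriction T(\le n)=F\restriction T(\le n)$; (M3) for all $n<m$ in $\omega$ there is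 $F^n_m\in\mathcal M$ skipping only level $m$ such that $F^n_m(b)=\mathcal S(b,\bar p,c)$ whenever $a\in T(n)$, $b\in T(m)$, $\bar p\in T^{<\omega}$, $c\in\Sigma$, $\mathcal S(a,\bar p,c)$ is defined and $\mathcal S(a,\bar p,c)\preceq b$. Notation: $\mathcal{AM}=\{F\restriction T(<k): F\in\mathcal M,\ k>0\}$. *)

(* Defs.v *)
From Stdlib Require Import ClassicalEpsilon.
From mathcomp Require Import all_boot.
Set Implicit Arguments. Unset Strict Implicit. Unset Printing Implicit Defensive.

Section Trees.
Variable T : countType.
Variable le : T -> T -> Prop.

Definition lt (a b : T) : Prop := le a b /\ a <> b.

Definition is_tree : Prop :=
  [/\ (forall a, le a a),
      (forall a b, le a b -> le b a -> a = b),
      (forall a b c, le a b -> le b c -> le a c),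
      (forall a, exists s : seq T, forall b, b \in s <-> lt b a)
    & (forall a b c, lt b a -> lt c a -> le b c \/ le c b)].

Definition level (a : T) : nat :=
  epsilon (inhabits 0%N)
    (fun n => exists s : seq T,
       [/\ uniq s, (forall b, b \in s <-> lt b a) & size s = n]).

Definition imm_succ (a b : T) : Prop :=
  lt a b /\ ~ (exists c, lt a c /\ lt c b).

Variable Sigma : Type.
Variable S : T -> seq T -> Sigma -> option T.

Definition is_S_tree : Prop :=
  is_tree /\ [/\
      (forall a, exists s : seq T, forall b, imm_succ a b -> b \in s),
      (exists s : seq T, forall a, level a = 0%N -> a \in s),
      (* (S1): entries of p have level <= level a - 1 (i.e. < level a) *)
      (forall a p c b, S a p c = Some b ->
          imm_succ a b /\ (forall x, x \in p -> (level x < level a)%N)),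
      (forall a b p q c d x, S a p c = Some x -> S b q d = Some x ->
          [/\ a = b, p = q & c = d])
    &
      (forall a b, imm_succ a b -> exists p c, S a p c = Some b)].

Definition level_preserving (F : T -> T) : Prop :=
  forall a b, level a = level b -> level (F a) = level (F b).

Definition tilde (F : T -> T) (n : nat) : nat :=
  epsilon (inhabits 0%N) (fun k => exists a, level a = n /\ level (F a) = k).

(* l ∈ tilde F [omega]  (tilde F is defined on the levels n with T(n) ≠ ∅) *)
Definition in_tilde_image (F : T -> T) (l : nat) : Prop :=
  exists n, (exists a, level a = n) /\ tilde F n = l.

Definition shape_preserving (F : T -> T) : Prop :=
  [/\ injective F,
      level_preserving F,
      (forall a p c b, S a p c = Some b ->
          exists b', S (F a) (map F p) c = Some b' /\ le b' (F b))
    & (forall a b, level a = 0%N -> le a b -> le a (F b))].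

Definition skips (F : T -> T) (m : nat) : Prop := ~ in_tilde_image F m.

Definition skips_only (F : T -> T) (m : nat) : Prop :=
  forall l, in_tilde_image F l <-> l <> m.

Variable M : (T -> T) -> Prop.

Definition is_SM_tree : Prop :=
  [/\ is_S_tree,
      (forall F, M F -> shape_preserving F),
      (* (M1) *)
      [/\ M id,
          (forall F G, M F -> M G -> M (F \o G))
        & (forall Fs : nat -> T -> T, (forall i, M (Fs i)) ->
            (forall i a, (level a <= i)%N -> Fs i a = Fs i.+1 a) ->
            exists Finf, M Finf /\
              (forall i a, (level a <= i)%N -> Finf a = Fs i a))],
      (* (M2) *)
      (forall n F, M F -> (0 < tilde F n)%N -> skips F (tilde F n).-1 ->
         exists F1 F2, [/\ M F1, M F2, skips_only F2 (tilde F n).-1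
           & forall a, (level a <= n)%N -> F2 (F1 a) = F a])
    & (* (M3) *)
      (forall n m, (n < m)%N -> exists F, [/\ M F, skips_only F m
         & forall a b p c x, level a = n -> level b = m ->
             S a p c = Some x -> le x b -> S b p c = Some (F b)])].

End Trees.

(* Main.v *)
Require Import Defs.
From Stdlib Require Import ClassicalEpsilon FunctionalExtensionality.
From mathcomp Require Import all_boot zify.
Set Implicit Arguments. Unset Strict Implicit. Unset Printing Implicit Defensive.

Lemma level_spec (T : countType) (le : T -> T -> Prop) (Ht : is_tree le) a (s : seq T) :
  uniq s -> (forall b, b \in s <-> lt le b a) -> level le a = size s.
Proof.
move=> us hs.
case: Ht => _ _ _ Hfin _.
have ex : exists n, exists s : seq T,
    [/\ uniq s, (forall b, b \in s <-> lt le b a) & size s = n].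
  case: (Hfin a) => s0 h0; exists (size (undup s0)), (undup s0); split => //.
    exact: undup_uniq.
  by move=> b; rewrite mem_undup.
have := epsilon_spec (inhabits 0%N) _ ex.
rewrite /level; case=> s1 [u1 h1 <-].
apply: perm_size; apply: uniq_perm => // x.
apply/idP/idP => hx; [apply/hs; apply/h1 | apply/h1; apply/hs] => //.
Qed.

Lemma lt_level (T : countType) (le : T -> T -> Prop) (Ht : is_tree le) a b :
  lt le a b -> (level le a < level le b)%N.
Proof.
move=> hab.
have Ht' := Ht; case: Ht' => Hr Has Htr Hfin _.
case: (Hfin a) => s0 h0.
have ha : forall x, x \in undup s0 <-> lt le x a by move=> x; rewrite mem_undup.
rewrite (level_spec Ht (undup_uniq s0) ha).
case: (Hfin b) => s1 h1.
have hb : forall x, x \in undup s1 <-> lt le x b by move=> x; rewrite mem_undup.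
rewrite (level_spec Ht (undup_uniq s1) hb).
have: (size (a :: undup s0) <= size (undup s1))%N; last by [].
apply: uniq_leq_size.
  rewrite /= undup_uniq andbT; by apply/negP => /ha [_]; apply.
move=> x; rewrite inE => /orP [/eqP -> | /ha hx]; apply/hb => //.
case: hx => hxa nxa; case: hab => hab nab; split; first exact: Htr hab.
move=> exb; subst x; apply: nab; exact: Has.
Qed.

Lemma le_level_eq (T : countType) (le : T -> T -> Prop) (Ht : is_tree le) a b :
  le a b -> level le a = level le b -> a = b.
Proof.
move=> hab hl; case: (eqVneq a b) => // nab.
have := lt_level Ht (conj hab (elimN eqP nab)); rewrite hl; lia.
Qed.

Lemma le_level (T : countType) (le : T -> T -> Prop) (Ht : is_tree le) a b :
  le a b -> (level le a <= level le b)%N.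
Proof.
move=> hab; case: (eqVneq a b) => [-> //| nab].
exact: ltnW (lt_level Ht (conj hab (elimN eqP nab))).
Qed.

Lemma imm_level (T : countType) (le : T -> T -> Prop) (Ht : is_tree le) a b :
  imm_succ le b a -> level le a = (level le b).+1.
Proof.
move=> [hba nc].
have Ht' := Ht; case: Ht' => Hr Has Htr Hfin Hlin.
case: (Hfin b) => s1 h1.
have hb : forall x, x \in undup s1 <-> lt le x b by move=> x; rewrite mem_undup.
rewrite (level_spec Ht (undup_uniq s1) hb).
have -> : (size (undup s1)).+1 = size (b :: undup s1) by [].
apply: level_spec => //.
  rewrite /= undup_uniq andbT; by apply/negP => /hb [_]; apply.
move=> x; rewrite inE; split.
  move=> /orP [/eqP -> // | /hb [hxb nxb]].
  case: hba => hba nba; split; first exact: Htr hba.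
  move=> exa; subst x; apply: nba; exact: Has.
move=> hxa; case: (eqVneq x b) => [-> //| nxb] /=; apply/hb.
case: (Hlin a x b hxa hba) => h; first by split => //; apply/eqP.
exfalso; apply: nc; exists x; split => //; split => //; apply/eqP; by rewrite eq_sym.
Qed.

Lemma seq_max (T : eqType) (f : T -> nat) (s : seq T) : s <> [::] ->
  exists x, x \in s /\ forall y, y \in s -> (f y <= f x)%N.
Proof.
elim: s => // x s IH _; case: s IH => [|y s] IH.
  by exists x; split; rewrite ?inE // => z; rewrite inE => /eqP ->.
case: IH => // m [hm hmax].
case: (leqP (f x) (f m)) => h.
  exists m; split; first by rewrite inE hm orbT.
  by move=> z; rewrite inE => /orP [/eqP -> //| /hmax].
exists x; split; first by rewrite inE eqxx.
move=> z; rewrite inE => /orP [/eqP -> //| /hmax]; lia.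
Qed.

Lemma parent_ex (T : countType) (le : T -> T -> Prop) (Ht : is_tree le) a j :
  level le a = j.+1 -> exists b, imm_succ le b a /\ level le b = j.
Proof.
move=> hl.
have Ht' := Ht; case: Ht' => Hr Has Htr Hfin Hlin.
case: (Hfin a) => s0 h0.
have ha : forall x, x \in undup s0 <-> lt le x a by move=> x; rewrite mem_undup.
have hs := level_spec Ht (undup_uniq s0) ha.
have ne : undup s0 <> [::] by move=> e; rewrite e hl in hs.
case: (seq_max (level le) ne) => b [hb hmax].
have ib : imm_succ le b a.
  split; first exact/ha.
  move=> [c [hbc hca]].
  have := hmax c (proj2 (ha c) hca).
  have := lt_level Ht hbc; lia.
exists b; split => //.
have := imm_level Ht ib; rewrite hl; lia.
Qed.

Lemma level_down (T : countType) (le : T -> T -> Prop) (Ht : is_tree le) a j :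
  (j <= level le a)%N -> exists b, level le b = j.
Proof.
suff: forall k a0, level le a0 = k -> (j <= k)%N -> exists b, level le b = j.
  by move=> H; apply: H.
elim=> [|k IH] a0 ek hj.
  by exists a0; lia.
case: (eqVneq j k.+1) => [-> | ne]; first by exists a0.
case: (parent_ex Ht ek) => b [_ hb].
apply: (IH b hb); lia.
Qed.

Lemma tilde_spec (T : countType) (le : T -> T -> Prop) (F : T -> T) j :
  (exists a, level le a = j) ->
  exists a, level le a = j /\ level le (F a) = tilde le F j.
Proof.
case=> a ha.
have ex : exists k, exists a, level le a = j /\ level le (F a) = k by exists (level le (F a)), a.
exact: (epsilon_spec (inhabits 0%N) _ ex).
Qed.

Lemma tilde_eq (T : countType) (le : T -> T -> Prop) (F : T -> T) a :
  level_preserving le F -> tilde le F (level le a) = level le (F a).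
Proof.
move=> lp; case: (tilde_spec F (ex_intro _ a (erefl (level le a)))) => b [hb <-].
exact: lp.
Qed.

Lemma sp_succ (T : countType) (le : T -> T -> Prop) Sigma (SS : T -> seq T -> Sigma -> option T)
  (HS : is_S_tree le SS) F : shape_preserving le SS F ->
  forall b p c a, SS b p c = Some a ->
  exists x, [/\ SS (F b) (map F p) c = Some x, le x (F a) & level le x = (level le (F b)).+1].
Proof.
case: HS => Ht [_ _ HS1 _ _] [_ _ Hsh _] b p c a e.
case: (Hsh _ _ _ _ e) => x [ex lx]; exists x; split => //.
case: (HS1 _ _ _ _ ex) => im _. exact (imm_level Ht im).
Qed.

Lemma sp_incr (T : countType) (le : T -> T -> Prop) Sigma (SS : T -> seq T -> Sigma -> option T)
  (HS : is_S_tree le SS) F : shape_preserving le SS F ->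
  forall b a, imm_succ le b a -> (level le (F b) < level le (F a))%N.
Proof.
move=> sp b a im.
have HS' := HS; case: HS' => Ht [_ _ _ _ HS3].
case: (HS3 _ _ im) => p [c e].
case: (sp_succ HS sp e) => x [_ lx ex].
have := le_level Ht lx; lia.
Qed.

Lemma all_levels (T : countType) (le : T -> T -> Prop) Sigma (SS : T -> seq T -> Sigma -> option T)
  M (H : is_SM_tree le SS M) j : exists a, level le a = j.
Proof.
case: H => [[Ht _] _ _ _ HM3].
case: (HM3 0%N 1%N isT) => F [_ so _].
have : in_tilde_image le F j.+2 by apply/so.
case=> k [ek tk].
case: (tilde_spec F ek) => a [_ la].
apply: (level_down Ht (a := F a)); rewrite la tk; lia.
Qed.

Lemma tilde_incr (T : countType) (le : T -> T -> Prop) Sigma (SS : T -> seq T -> Sigma -> option T)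
  (HS : is_S_tree le SS) (Hall : forall j, exists a, level le a = j) F :
  shape_preserving le SS F -> forall j, (tilde le F j < tilde le F j.+1)%N.
Proof.
move=> sp j; have sp' := sp; case: sp' => _ lp _ _.
case: (Hall j.+1) => a ha.
case: (parent_ex (proj1 HS) ha) => b [im hb].
rewrite -ha -hb !tilde_eq //; exact (sp_incr HS sp im).
Qed.

Lemma tilde_mono (T : countType) (le : T -> T -> Prop) Sigma (SS : T -> seq T -> Sigma -> option T)
  (HS : is_S_tree le SS) (Hall : forall j, exists a, level le a = j) F :
  shape_preserving le SS F -> forall i j, (i < j)%N -> (tilde le F i < tilde le F j)%N.
Proof.
move=> sp i; elim=> // j IH hij.
have := tilde_incr HS Hall sp j.
case: (eqVneq i j) => [-> //| ne].
have := IH ltac:(lia); lia.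
Qed.

Lemma tilde_ge (T : countType) (le : T -> T -> Prop) Sigma (SS : T -> seq T -> Sigma -> option T)
  (HS : is_S_tree le SS) (Hall : forall j, exists a, level le a = j) F :
  shape_preserving le SS F -> forall j, (j <= tilde le F j)%N.
Proof.
move=> sp; elim=> // j IH; have := tilde_incr HS Hall sp j; lia.
Qed.

Lemma sp_id (T : countType) (le : T -> T -> Prop) Sigma (SS : T -> seq T -> Sigma -> option T)
  (HS : is_S_tree le SS) F m : shape_preserving le SS F ->
  (forall a, (level le a < m)%N -> level le (F a) = level le a) ->
  forall a, (level le a < m)%N -> F a = a.
Proof.
move=> sp hl.
have HS' := HS; case: HS' => Ht [_ _ HS1 _ HS3].
have sp' := sp; case: sp' => _ _ _ H0.
suff: forall k a, level le a = k -> (k < m)%N -> F a = a.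
  by move=> H a ha; exact: H _ _ (erefl _) ha.
elim/ltn_ind=> k IH a ek hk.
case: k IH ek hk => [|k] IH ek hk.
  have Hr := (let: And5 r _ _ _ _ := Ht in r).
  apply: esym; apply (le_level_eq Ht (H0 a a ek (Hr a))).
  by rewrite hl ek.
case: (parent_ex Ht ek) => b [im hb].
case: (HS3 _ _ im) => p [c e].
case: (sp_succ HS sp e) => x [ex lx _].
have Fb : F b = b by apply: (IH k) => //; lia.
have Fp : map F p = p.
  rewrite -[RHS]map_id; apply/eq_in_map => y hy /=.
  case: (HS1 _ _ _ _ e) => _ /(_ y hy) ly.
  apply: (IH (level le y)) => //; lia.
rewrite Fb Fp e in ex; case: ex => exa; subst x.
apply: esym; apply (le_level_eq Ht lx); rewrite hl ek //.
Qed.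

Lemma tilde_le (T : countType) (le : T -> T -> Prop) Sigma (SS : T -> seq T -> Sigma -> option T)
  (HS : is_S_tree le SS) (Hall : forall j, exists a, level le a = j) F :
  shape_preserving le SS F -> forall i j, (i <= j)%N -> (tilde le F i <= tilde le F j)%N.
Proof.
move=> sp i j hij; case: (eqVneq i j) => [-> //| ne].
have := tilde_mono HS Hall sp (i := i) (j := j) ltac:(lia); lia.
Qed.

Lemma tilde_agree (T : countType) (le : T -> T -> Prop) (Hall : forall j, exists a, level le a = j)
  F G N : level_preserving le F -> level_preserving le G ->
  (forall a, (level le a <= N)%N -> F a = G a) ->
  forall j, (j <= N)%N -> tilde le F j = tilde le G j.
Proof.
move=> lF lG hag j hj; case: (Hall j) => a ha.
by rewrite -ha !tilde_eq // hag // ha.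
Qed.

Lemma sp_unique (T : countType) (le : T -> T -> Prop) Sigma (SS : T -> seq T -> Sigma -> option T)
  (HS : is_S_tree le SS) F G n :
  shape_preserving le SS F -> shape_preserving le SS G ->
  (forall a, (level le a <= n)%N -> F a = G a) ->
  (forall j, (n <= j)%N -> tilde le F j.+1 = (tilde le F j).+1) ->
  (forall j, (n <= j)%N -> tilde le G j.+1 = (tilde le G j).+1) ->
  forall a, F a = G a.
Proof.
move=> spF spG hag tF tG.
have HS' := HS; case: HS' => Ht [_ _ HS1 _ HS3].
have lF : level_preserving le F by case: spF.
have lG : level_preserving le G by case: spG.
suff: forall k a, level le a = k -> F a = G a by move=> H a; exact: H _ _ (erefl _).
elim/ltn_ind=> k IH a ek.
case: (leqP k n) => hk; first by apply: hag; rewrite ek.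
case: k IH ek hk => [|j] IH ek hk; first by [].
case: (parent_ex Ht ek) => b [im hb].
case: (HS3 _ _ im) => p [c e].
case: (sp_succ HS spF e) => x [ex lx ex1].
case: (sp_succ HS spG e) => y [ey ly ey1].
have Fx : F a = x.
  apply: esym; apply (le_level_eq Ht lx).
  by rewrite ex1 -(tilde_eq _ lF) -(tilde_eq _ lF) ek hb tF //; lia.
have Gy : G a = y.
  apply: esym; apply (le_level_eq Ht ly).
  by rewrite ey1 -(tilde_eq _ lG) -(tilde_eq _ lG) ek hb tG //; lia.
have Fb : F b = G b by apply: (IH j) => //.
have Fp : map F p = map G p.
  apply/eq_in_map => z hz /=.
  case: (HS1 _ _ _ _ e) => _ /(_ z hz) lz.
  apply: (IH (level le z)) => //; lia.
rewrite Fx Gy; rewrite Fb Fp ey in ex; by case: ex.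
Qed.

Lemma tilde_from_image (T : countType) (le : T -> T -> Prop) Sigma (SS : T -> seq T -> Sigma -> option T)
  (HS : is_S_tree le SS) (Hall : forall j, exists a, level le a = j) F n k :
  shape_preserving le SS F -> tilde le F n = k ->
  (forall l, (k <= l)%N -> in_tilde_image le F l) ->
  forall j, (n <= j)%N -> tilde le F j.+1 = (tilde le F j).+1.
Proof.
move=> sp tk him.
have H : forall i, tilde le F (n + i) = (k + i)%N.
  elim=> [|i IH]; first by rewrite !addn0.
  case: (him (k + i.+1)%N) => [|j0 [_ tj0]]; first lia.
  case: (leqP j0 (n + i)) => hj.
    have := tilde_le HS Hall sp hj; lia.
  have := tilde_le HS Hall sp hj; have := tilde_incr HS Hall sp (n + i).
  rewrite addnS; lia.
move=> j hj; have -> : j = (n + (j - n))%N by lia.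
rewrite -addnS !H; lia.
Qed.

Lemma fill_step (T : countType) (le : T -> T -> Prop) Sigma (SS : T -> seq T -> Sigma -> option T)
  M (HM : is_SM_tree le SS M) N d : forall G, M G ->
  tilde le G N.+1 = (tilde le G N + 1 + d)%N ->
  exists G', [/\ M G', (forall a, (level le a <= N)%N -> G' a = G a)
                & tilde le G' N.+1 = (tilde le G N).+1].
Proof.
have HM' := HM; case: HM' => HS Hsp _ HM2 _.
have Ht := proj1 HS.
have Hall := all_levels HM.
elim: d => [|d IH] G MG tG.
  by exists G; split => //; rewrite tG addn0 addn1.
set t := tilde le G N.+1.
set m := t.-1.
have spG := Hsp _ MG.
have t0 : (0 < t)%N by rewrite /t tG; lia.
have sk : skips le G m.
  move=> [j [_ tj]].
  case: (leqP j N) => hj.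
    have := tilde_le HS Hall spG hj; rewrite tj /m /t tG; lia.
  have := tilde_le HS Hall spG hj; rewrite tj /m /t; lia.
case: (HM2 N.+1 G MG t0 sk) => F1 [F2 [MF1 MF2 so comp]].
have sp2 := Hsp _ MF2; have sp1 := Hsp _ MF1.
have lp2 : level_preserving le F2 by case: sp2.
have lp1 : level_preserving le F1 by case: sp1.
have lpG : level_preserving le G by case: spG.
have ta : forall j, (j < m)%N -> tilde le F2 j = j.
  elim/ltn_ind=> j IHj hj.
  have : in_tilde_image le F2 j by apply/so; lia.
  case=> i [_ ti].
  case: (ltngtP i j) => h.
  - have := IHj i h ltac:(lia); lia.
  - have := tilde_mono HS Hall sp2 h; have := tilde_ge HS Hall sp2 j; lia.
  - by subst i.
have tb : (m < tilde le F2 m)%N.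
  have := tilde_ge HS Hall sp2 m.
  case: (eqVneq (tilde le F2 m) m) => e; last lia.
  exfalso; apply: (proj1 (so m)) => //; exists m; split => //; exact: Hall.
have id2 : forall x, (level le x < m)%N -> F2 x = x.
  apply: (sp_id HS sp2) => x hx; by rewrite -(tilde_eq _ lp2) ta.
have ag : forall a, (level le a <= N)%N -> F1 a = G a.
  move=> a ha.
  have hG : (level le (G a) < m)%N.
    rewrite -(tilde_eq _ lpG); have := tilde_le HS Hall spG ha.
    rewrite /m /t tG; lia.
  have h1 : (level le (F1 a) < m)%N.
    have := tilde_ge HS Hall sp2 (level le (F1 a)).
    rewrite (tilde_eq _ lp2) comp; [lia | lia].
  by rewrite -(id2 _ h1) comp //; lia.
have tF1 : tilde le F1 N.+1 = m.
  case: (Hall N.+1) => a ha.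
  have e2 : level le (F2 (F1 a)) = t by rewrite comp ?ha // /t -ha (tilde_eq _ lpG).
  rewrite -ha (tilde_eq _ lp1).
  case: (ltngtP (level le (F1 a)) m) => h //.
  - have := ta _ h; rewrite (tilde_eq _ lp2) e2 /m; lia.
  - have := tilde_mono HS Hall sp2 h; rewrite (tilde_eq _ lp2) e2; move: tb t0; rewrite /m; lia.
have tN : tilde le F1 N = tilde le G N.
  apply: (tilde_agree Hall lp1 lpG ag); lia.
case: (IH F1 MF1) => [|G' [MG' agG' tG']].
  rewrite tF1 tN /m /t tG; lia.
exists G'; split => //.
  by move=> a ha; rewrite agG' // ag.
by rewrite tG' tN.
Qed.

Theorem mainTheorem5 (T : countType) (le : T -> T -> Prop) (Sigma : Type)
    (S : T -> seq T -> Sigma -> option T) (M : (T -> T) -> Prop)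
    (HT : is_SM_tree le S M) (n : nat) (F0 : T -> T) (HF0 : M F0) :
  exists! Fp : T -> T,
    [/\ M Fp,
        (forall a : T, (level le a <= n)%N -> Fp a = F0 a)
      & (forall l : nat, (tilde le F0 n <= l)%N -> in_tilde_image le Fp l)].
Proof.
have HT' := HT; case: HT' => HS Hsp [_ _ HM1] _ _.
have Hall := all_levels HT.
have lpM : forall G, M G -> level_preserving le G by move=> G /Hsp [].
pose P N (G G' : T -> T) := [/\ M G', (forall a, (level le a <= N)%N -> G' a = G a)
                & tilde le G' N.+1 = (tilde le G' N).+1].
have Pex : forall N G, M G -> exists G', P N G G'.
  move=> N G MG.
  have := tilde_incr HS Hall (Hsp _ MG) N.
  move=> hinc.
  case: (fill_step HT (N := N) (d := (tilde le G N.+1 - tilde le G N - 1)%N) MG) => [|G' [MG' ag tG']].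
    lia.
  exists G'; split => //.
  rewrite tG' (tilde_agree Hall (lpM _ MG') (lpM _ MG) ag (j := N)) //.
pose next (G : T -> T) N := epsilon (inhabits G) (P N G).
pose H := fix H i := if i is i'.+1 then next (H i') (n + i')%N else F0.
have Inv : forall i, [/\ M (H i), (forall a, (level le a <= n)%N -> H i a = F0 a)
     & forall j, (n <= j)%N -> (j < n + i)%N -> tilde le (H i) j.+1 = (tilde le (H i) j).+1].
  elim=> [|i [MHi agi ti]].
    by split => // j hj1 hj2; lia.
  have [MH' agH' tH'] : P (n + i)%N (H i) (H i.+1).
    exact: (epsilon_spec (inhabits (H i)) (P (n + i)%N (H i)) (Pex _ _ MHi)).
  split => //.
    by move=> a ha; rewrite agH' ?agi //; lia.
  move=> j hj1 hj2.
  case: (eqVneq j (n + i)%N) => [-> //| ne].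
  have ta := tilde_agree Hall (lpM _ MH') (lpM _ MHi) agH'.
  rewrite !ta ?ti //; lia.
have chain : forall i a, (level le a <= i)%N -> H i a = H i.+1 a.
  move=> i a ha; case: (Inv i) => MHi _ _.
  have [_ agH' _] : P (n + i)%N (H i) (H i.+1).
    exact: (epsilon_spec (inhabits (H i)) (P (n + i)%N (H i)) (Pex _ _ MHi)).
  by rewrite agH' //; lia.
case: (HM1 H (fun i => let: And3 m _ _ := Inv i in m) chain) => Finf [MF agF].
have lpF := lpM _ MF.
have F0F : forall a, (level le a <= n)%N -> Finf a = F0 a.
  move=> a ha; rewrite (agF n a ha); by case: (Inv n) => _ -> .
have tF : forall j, (n <= j)%N -> tilde le Finf j.+1 = (tilde le Finf j).+1.
  move=> j hj; case: (Inv j.+1) => MHj _ tj.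
  have ta := tilde_agree Hall lpF (lpM _ MHj) (agF j.+1).
  rewrite !ta ?tj //; lia.
have tn : tilde le Finf n = tilde le F0 n by apply: (tilde_agree Hall lpF (lpM _ HF0) F0F).
exists Finf; split.
  split => // l hl.
  have Hi : forall i, tilde le Finf (n + i) = (tilde le F0 n + i)%N.
    elim=> [|i IH]; first by rewrite !addn0.
    by rewrite addnS tF ?IH ?addnS //; lia.
  exists (n + (l - tilde le F0 n))%N; split; first exact: Hall.
  rewrite Hi; lia.
move=> G [MG agG imG].
apply: functional_extensionality => a.
have tG := tilde_from_image HS Hall (Hsp _ MG) (n := n) (k := tilde le F0 n).
apply: (sp_unique HS (Hsp _ MF) (Hsp _ MG) (n := n)) => //.
- by move=> b hb; rewrite F0F // agG.
- apply: tG => //; rewrite (tilde_agree Hall (lpM _ MG) (lpM _ HF0) agG) //.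
Qed.
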